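(* Let $a,b,c,e\in\mathbb Z$ with $a\neq0$, $e>0$, such that $h_3(j)=aj^3+bj^2+cj+e$ satisfies $h_3(j)\ge0$ for all integers $j\ge0$ (so $h_3\in\mathcal H_0$). Let $\alpha=a/e$, $\beta=b/e$, $\gamma=c/e$ and $$f(x)=\tfrac12x^2-\left(\alpha+\beta+\gamma+\tfrac32\right)x+(9\alpha+5\beta+3\gamma+2).$$ Assume $\alpha+\beta+\gamma\ge 2$. If there exists an integer $d$ with $3\le d\le c(h_3)+1$ and $f(d)<0$, then $\operatorname{hdepth}(h_3)<d$.
   Context: Let $\mathcal H_0$ denote the set of functions $h:\mathbb Z_{\ge 0}\to\mathbb Z_{\ge 0}$ with $h(0)>0$. For $h\in\mathcal H_0$ and integers $0\le k\le d$, put $\beta_k^d(h)=\sum_{j=0}^k(-1)^{k-j}\binom{d-j}{k-j}h(j)$. The Hilbert depth of $h$ is $\operatorname{hdepth}(h)=\max\{d\in\mathbb Z_{\ge0}:\ \beta_k^d(h)\ge 0\text{ for all }0\le k\le d\}$; this set contains $d=0$ and is known to be bounded above by $c(h):=\lfloor h(1)/h(0)\rfloor$, so the maximum exists. *)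

(* Defs.v *)
From mathcomp Require Import all_boot all_order all_algebra.
Set Implicit Arguments. Unset Strict Implicit. Unset Printing Implicit Defensive.
Import Order.TTheory GRing.Theory Num.Theory.
Local Open Scope ring_scope.

(* beta_k^d(h) = sum_{j=0}^k (-1)^(k-j) C(d-j, k-j) h(j), computed in int.
   Only used with k <= d, so the truncated subtractions d-j, k-j are exact. *)
Definition hbeta (h : nat -> nat) (d k : nat) : int :=
  \sum_(j < k.+1) (-1) ^+ (k - j)%N * ('C(d - j, k - j))%:Z * (h j)%:Z.

Definition hdepth_ok (h : nat -> nat) (d : nat) : bool :=
  [forall k : 'I_d.+1, 0 <= hbeta h d k].

Definition cbound (h : nat -> nat) : nat := (h 1 %/ h 0)%N.

(* Hilbert depth: the maximum admissible d. The admissible set is known to be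
   contained in [0, c(h)] (and to contain 0), so the max over d <= c(h)
   is the max of the whole set. *)
Definition hdepth (h : nat -> nat) : nat :=
  (\max_(d < (cbound h).+1 | hdepth_ok h d) d)%N.

(* Main.v *)
Require Import Defs.
From mathcomp Require Import all_boot all_order all_algebra ring lra zify.
Import Order.TTheory GRing.Theory Num.Theory.
Local Open Scope ring_scope.
Lemma B2e h n : hbeta h n.+1 2 = ('C(n.+1,2))%:Z * (h 0%N)%:Z - (n%:Z) * (h 1%N)%:Z + (h 2%N)%:Z.
Proof. rewrite /hbeta !big_ord_recr big_ord0 /= !subSS !subn0 ?subnn bin0 bin1. ring. Qed.
Lemma B1e h n : hbeta h n 1 = (h 1%N)%:Z - (n%:Z) * (h 0%N)%:Z.
Proof. rewrite /hbeta !big_ord_recr big_ord0 /= !subn0 ?subnn bin0 bin1. ring. Qed.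
Lemma B0e h n : hbeta h n 0 = (h 0%N)%:Z.
Proof. rewrite /hbeta !big_ord_recr big_ord0 /= !subn0 bin0. ring. Qed.

Lemma C2 n : ('C(n.+1,2) * 2 = n.+1 * n)%N.
Proof. elim: n => [|n IH]; first by []. rewrite binS bin1. lia. Qed.

Definition trip h n := [/\ 0 <= hbeta h n 0, 0 <= hbeta h n 1 & 0 <= hbeta h n 2].

Lemma step h n : trip h n.+2 -> trip h n.+1.
Proof.
rewrite /trip !B2e !B1e !B0e => -[H0 H1 H2]; split => //.
  have -> : (h 1%N)%:Z - n.+1%:Z * (h 0%N)%:Z = ((h 1%N)%:Z - n.+2%:Z * (h 0%N)%:Z) + (h 0%N)%:Z.
    ring.
  exact: addr_ge0.
rewrite (binS n.+1 1) bin1 in H2.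
have -> : 'C(n.+1, 2)%:Z * (h 0%N)%:Z - n%:Z * (h 1%N)%:Z + (h 2%N)%:Z =
  (('C(n.+1, 2) + n.+1)%N%:Z * (h 0%N)%:Z - n.+1%:Z * (h 1%N)%:Z + (h 2%N)%:Z)
  + ((h 1%N)%:Z - n.+2%:Z * (h 0%N)%:Z) + (h 0%N)%:Z.
  rewrite PoszD; ring.
by apply: addr_ge0 => //; apply: addr_ge0.
Qed.

Lemma down h k n : trip h (n.+1 + k) -> trip h n.+1.
Proof.
elim: k => [|k IH]; first by rewrite addn0.
rewrite addnS => H; apply: IH; exact: step.
Qed.

Lemma ok_trip h n : (2 <= n)%N -> hdepth_ok h n -> trip h n.
Proof.
move=> n2 /forallP H; split.
- by have := H (inord 0); rewrite inordK.
- by have := H (inord 1); rewrite inordK //; lia.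
- by have := H (inord 2); rewrite inordK //; lia.
Qed.

Theorem lemma3p2 (a b c e : int) (h : nat -> nat)
  (ha : a != 0) (he : 0 < e)
  (hh : forall j : nat,
      (h j)%:Z = a * (j%:Z) ^+ 3 + b * (j%:Z) ^+ 2 + c * j%:Z + e)
  (hsum : 2 <= (a%:~R / e%:~R) + (b%:~R / e%:~R) + (c%:~R / e%:~R) :> rat)
  (d : nat) (hd3 : (3 <= d)%N) (hdc : (d <= cbound h + 1)%N)
  (hf : let al : rat := a%:~R / e%:~R in
        let be : rat := b%:~R / e%:~R in
        let ga : rat := c%:~R / e%:~R in
        (1 / 2) * (d%:R) ^+ 2 - (al + be + ga + 3 / 2) * d%:R
          + (9 * al + 5 * be + 3 * ga + 2) < 0) :
  (hdepth h < d)%N.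
Proof.
case: d hd3 hdc hf => // m hd3 hdc hf.
rewrite ltnS; apply/bigmax_leqP => i ok.
rewrite leqNgt; apply/negP => lt_mi.
have Ti : trip h i by apply: ok_trip => //; lia.
have Tm : trip h m.+1.
  by apply: (@down h (i - m.+1)); rewrite subnKC.
case: Tm => _ _; rewrite B2e !hh /= => H.
have C := C2 m.
have [k Hk] : exists k, 'C(m.+1, 2) = k by eexists.
rewrite Hk in H C.
have H2 : 0 <= (m.+1%:Z * m%:Z) * e - 2 * m%:Z * (a + b + c + e) + 2 * (8 * a + 4 * b + 2 * c + e).
  have -> : (m.+1%:Z * m%:Z) = (k * 2)%N%:Z by rewrite C.
  have H3 := mulr_ge0 (isT : (0:int) <= 2) H.
  apply: le_trans H3 _; rewrite le_eqVlt; apply/orP; left; apply/eqP.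
  rewrite PoszM. ring.
move: H2; rewrite -(ler0z rat) => H2.
move: hf => /= hf.
have Ep : 0 < (e%:~R : rat) by rewrite ltr0z.
have EQ : ((m.+1%:Z * m%:Z) * e - 2 * m%:Z * (a + b + c + e) + 2 * (8 * a + 4 * b + 2 * c + e))%:~R
  = 2 * (e%:~R : rat) * (1 / 2 * m.+1%:R ^+ 2 - (a%:~R / e%:~R + b%:~R / e%:~R + c%:~R / e%:~R + 3 / 2) * m.+1%:R +
    (9 * (a%:~R / e%:~R) + 5 * (b%:~R / e%:~R) + 3 * (c%:~R / e%:~R) + 2) : rat).
  field; by rewrite gt_eqF.
move: H2; rewrite EQ pmulr_rge0 ?mulr_gt0 //; by rewrite leNgt hf.
Qed.
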